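(* Let $A\in\mathbb{C}^{n\times n}$ and let $H$ be a subspace of $\mathbb{C}^n$ invariant under $A$, with $A_{|_H}$ the restriction of $A$ to $H$. For $\lambda\in\mathbb{C}$ let $\alpha_\lambda(\cdot)$ and $\gamma_\lambda(\cdot)$ denote the algebraic and geometric multiplicities of $\lambda$ as an eigenvalue (taken to be $0$ if $\lambda$ is not an eigenvalue). Then for every $\lambda\in\mathbb{C}$, $$\alpha_\lambda(A)\le \alpha_\lambda(A_{|_H})+n-\dim H,\qquad \gamma_\lambda(A)\le\gamma_\lambda(A_{|_H})+n-\dim H.$$ Further, if $\mu$ is a vector norm on $\mathbb{C}^n$ and $|\lambda|>\mu^0_H(A)$, then $\alpha_\lambda(A)\le n-\dim H$ and $\gamma_\lambda(A)\le n-\dim H$.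
   Context: For a vector norm $\mu$ on $\mathbb{C}^n$ and a subspace $H$ invariant under $A$, the partial norm is $\mu^0_H(A)=\sup_{0\ne x\in H}\mu(Ax)/\mu(x)$. *)

(* Defs.v *)
From HB Require Import structures.
From mathcomp Require Import all_boot all_order all_algebra.
From mathcomp Require Import complex.
From mathcomp Require Import boolp classical_sets reals.
Set Implicit Arguments. Unset Strict Implicit. Unset Printing Implicit Defensive.
Import Order.TTheory GRing.Theory Num.Theory.
Local Open Scope ring_scope.

(* Convention: as everywhere in MathComp, a matrix A : 'M_n acts on row
   vectors x : 'rV_n by x |-> x *m A.  A subspace H of C^n is represented by
   a square matrix H : 'M_n whose row space is the subspace; x \in H is
   (x <= H)%MS, dim H = \rank H, and "H invariant under A" is stablemx H A.
   The restriction A_|H is MathComp's [restrictmx H A] (the matrix of the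
   restricted map in the basis [row_base H]). *)

Definition alg_mult (F : fieldType) (m : nat) (A : 'M[F]_m) (l : F) : nat :=
  mup l (char_poly A).

Definition geo_mult (F : fieldType) (m : nat) (A : 'M[F]_m) (l : F) : nat :=
  \rank (eigenspace A l).

Definition is_vnorm (R : rcfType) (n : nat) (mu : 'rV[R[i]]_n -> R) : Prop :=
  [/\ forall x, 0 <= mu x,
      forall x, mu x = 0 -> x = 0,
      forall (a : R[i]) x, mu (a *: x) = ComplexField.Normc.normc a * mu x
    & forall x y, mu (x + y) <= mu x + mu y].

Definition partial_norm (R : realType) (n : nat) (mu : 'rV[R[i]]_n -> R)
    (H A : 'M[R[i]]_n) : R :=
  sup [set r : R | exists x : 'rV[R[i]]_n,
         [/\ (x <= H)%MS, x != 0 & r = mu (x *m A) / mu x]].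

(* Main.v *)
Require Import Defs.
From HB Require Import structures.
From mathcomp Require Import all_boot all_order all_algebra.
From mathcomp Require Import complex.
From mathcomp Require Import boolp classical_sets reals.
From mathcomp Require Import topology normedtype derive.
From mathcomp Require Import ring zify.
Import numFieldNormedType.Exports.
Import Order.TTheory GRing.Theory Num.Theory.
Local Open Scope ring_scope.

Section VN.
Variables (R : realType) (n : nat) (mu : 'rV[R[i]]_n -> R).
Hypothesis hmu : is_vnorm mu.
Local Notation normc := (@ComplexField.Normc.normc R).

Lemma normc_real (t : R) : normc (t%:C)%C = `|t|.
Proof. by rewrite /= expr0n /= addr0 sqrtr_sqr. Qed.

Lemma normcN1 : normc (-1) = 1.
Proof. by rewrite /= oppr0 expr0n /= addr0 sqrrN expr1n sqrtr1. Qed.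

Lemma mu_ge0 x : 0 <= mu x. Proof. by case: hmu => h _ _ _; apply: h. Qed.
Lemma mu_eq0 x : mu x = 0 -> x = 0. Proof. by case: hmu => _ h _ _; apply: h. Qed.
Lemma muZ a x : mu (a *: x) = normc a * mu x. Proof. by case: hmu => _ _ h _; apply: h. Qed.
Lemma muD x y : mu (x + y) <= mu x + mu y. Proof. by case: hmu => _ _ _ h; apply: h. Qed.
Lemma mu0 : mu 0 = 0.
Proof. by have := muZ 0 0; rewrite scale0r ComplexField.Normc.normc0 mul0r. Qed.
Lemma muN x : mu (- x) = mu x.
Proof. by rewrite -scaleN1r muZ normcN1 mul1r. Qed.
Lemma muB x y : mu x - mu y <= mu (x - y).
Proof. by rewrite lerBlDr -{1}(subrK y x) muD. Qed.
Lemma mu_dist x y : `|mu x - mu y| <= mu (x - y).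
Proof.
rewrite ler_norml muB andbT lerNl opprD opprK addrC -[mu (x - y)]muN opprB; exact: muB.
Qed.
Lemma mu_sum (I : Type) (r : seq I) (P : pred I) (F : I -> 'rV[R[i]]_n) :
  mu (\sum_(i <- r | P i) F i) <= \sum_(i <- r | P i) mu (F i).
Proof.
elim/big_rec2: _ => [|i y x _ hx]; first by rewrite mu0.
exact: le_trans (muD _ _) (lerD (lexx _) hx).
Qed.

Local Open Scope complex_scope.
Definition phi (v : 'rV[R]_(n + n)) : 'rV[R[i]]_n :=
  \row_j ((lsubmx v 0 j)%:C + 'i * (rsubmx v 0 j)%:C).
Definition psi (x : 'rV[R[i]]_n) : 'rV[R]_(n + n) :=
  row_mx (\row_j @complex.Re R (x 0 j)) (\row_j @complex.Im R (x 0 j)).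
Lemma psiK : cancel psi phi.
Proof. by move=> x; apply/rowP => j; rewrite mxE row_mxKl row_mxKr !mxE -complexE. Qed.
Lemma phiK : cancel phi psi.
Proof.
move=> v; rewrite -[RHS](hsubmxK v); congr row_mx; apply/rowP => j; rewrite !mxE /=.
  by rewrite mul0r mul1r subr0 addr0.
by rewrite !mul0r mul1r !add0r.
Qed.
Lemma phiD v w : phi (v + w) = phi v + phi w.
Proof. apply/rowP => j; rewrite !mxE !rmorphD /=; ring. Qed.
Lemma phiZ (t : R) v : phi (t *: v) = t%:C *: phi v.
Proof. apply/rowP => j; rewrite !mxE !rmorphM /=; ring. Qed.
Lemma phi0 : phi 0 = 0.
Proof. by rewrite -(scale0r 0) phiZ rmorph0 scale0r. Qed.
Lemma phiN v : phi (- v) = - phi v.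
Proof. by rewrite -scaleN1r phiZ rmorphN1 scaleN1r. Qed.
Lemma phiB v w : phi (v - w) = phi v - phi w.
Proof. by rewrite phiD phiN. Qed.
Lemma coord_le (k : nat) (u : 'rV[R]_k) i : `|u 0 i| <= `|u|.
Proof.
rewrite [leRHS]/Num.Def.normr /= mx_normrE; apply/bigmax_geP; right => /=.
by exists (0, i).
Qed.
Lemma mu_phi_le (M : 'M[R[i]]_n) u :
  mu (phi u *m M) <= (\sum_i mu (phi 'e_i *m M)) * `|u|.
Proof.
rewrite {1}(row_sum_delta u) (big_morph phi phiD phi0) mulmx_suml.
apply: le_trans (mu_sum _ _ _ _) _; rewrite mulr_suml; apply: ler_sum => i _.
rewrite phiZ -scalemxAl muZ normc_real mulrC; apply: ler_wpM2l; first exact: mu_ge0.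
exact: coord_le.
Qed.
Lemma h_cont (M : 'M[R[i]]_n) : continuous (fun v : 'rV[R]_(n + n) => mu (phi v *m M)).
Proof.
move=> x; set K := \sum_i mu (phi 'e_i *m M).
have K0 : 0 <= K by apply: sumr_ge0 => i _; exact: mu_ge0.
have K1 : 0 < K + 1 by apply: ltr_wpDl.
apply/(@cvgrPdist_lt _ _ _ _ (nbhs_filter x)) => e e0.
have eK : 0 < e / (K + 1) by rewrite divr_gt0.
near=> y.
apply: (le_lt_trans (mu_dist _ _)).
rewrite -mulmxBl -phiB.
apply: le_lt_trans (mu_phi_le _ _) _.
have : `|x - y| < e / (K + 1).
  near: y; apply: (@cvgr_dist_lt _ _ _ _ (nbhs_filter x) id x) => //; exact: cvg_id.
rewrite ltr_pdivlMr // => h.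
apply: le_lt_trans h; rewrite mulrC; apply: ler_wpM2l; first exact: normr_ge0.
by rewrite lerDl.
Unshelve. all: by end_near.
Qed.
Local Open Scope classical_set_scope.
Lemma mu_bounded (A : 'M[R[i]]_n) : exists C, forall x, mu (x *m A) <= C * mu x.
Proof.
have phi_inj : injective phi := can_inj phiK.
case: (pselect (exists x : 'rV[R[i]]_n, x != 0)) => [[x0 x0n]|nox]; last first.
  exists 0 => x; have -> : x = 0.
    by apply: contrapT => hx; apply: nox; exists x; apply/eqP.
  by rewrite mul0mx mu0 mul0r.
pose S := [set v : 'rV[R]_(n + n) | `|v| = 1].
have S0 : S !=set0.
  have v0n : psi x0 != 0.
    by apply: contra x0n => /eqP h; rewrite -(psiK x0) h phi0.
  exists (`|psi x0|^-1 *: psi x0); rewrite /S /= normrZ normfV normr_id mulVf //.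
  by rewrite normr_eq0.
have Sc : compact S.
  apply: bounded_closed_compact.
    rewrite /bounded_near /=; exists 1; split; first exact: real1.
    by move=> M M1 v ->; rewrite ltW.
  have -> : S = Num.Def.normr @^-1` [set 1] by [].
  by move/continuous_closedP : (@norm_continuous _ 'rV[R]_(n + n)); apply; exact: closed_eq.
have [c cS cmin] := EVT_min_rV S0 Sc (continuous_subspaceT (h_cont 1)).
have [d dS dmax] := EVT_max_rV S0 Sc (continuous_subspaceT (h_cont A)).
set m := mu (phi c *m 1).
have m0 : 0 < m.
  rewrite lt_def mu_ge0 andbT; apply/eqP => /mu_eq0; rewrite mulmx1 -phi0 => /phi_inj c0.
  by move: cS; rewrite inE /S /= c0 normr0 => /esym/eqP; rewrite oner_eq0.
exists (mu (phi d *m A) / m) => x.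
have [->|xn] := eqVneq x 0; first by rewrite mul0mx mu0 mulr0.
set v := psi x; set t := `|v|.
have t0 : 0 < t by rewrite normr_gt0; apply: contra xn => /eqP h; rewrite -(psiK x) -/v h phi0.
set u := t^-1 *: v.
have uS : u \in S by rewrite inE /S /= normrZ normfV normr_id mulVf // gt_eqF.
have xu : x = t%:C%C *: phi u by rewrite -phiZ /u scalerA divff ?gt_eqF // scale1r psiK.
rewrite xu -scalemxAl !muZ !normc_real gtr0_norm //.
have h1 := cmin _ uS; have h2 := dmax _ uS; rewrite /= !mulmx1 in h1.
rewrite mulrCA; apply: ler_wpM2l; first exact: ltW.
apply: le_trans h2 _; rewrite mulrAC ler_pdivlMr //.
by apply: ler_wpM2l; [exact: mu_ge0 | rewrite /m mulmx1].
Qed.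
End VN.

Section Alg.
Variable F : fieldType.

Lemma mup_le_size (q : {poly F}) x : q != 0 -> (mup x q <= (size q).-1)%N.
Proof.
move=> qn0; rewrite mup_leq // prednK ?size_poly_gt0 //; apply/negP.
by move=> /(dvdp_leq qn0); rewrite size_exp_XsubC ltnn.
Qed.

Lemma char_poly_conj n (P A : 'M[F]_n) : P \in unitmx ->
  char_poly (P *m A *m invmx P) = char_poly A.
Proof.
move=> Pu; rewrite /char_poly /char_poly_mx !map_mxM.
have PQ : map_mx polyC P *m map_mx polyC (invmx P) = 1%:M :> 'M[{poly F}]_n.
  by rewrite -map_mxM mulmxV // map_mx1.
have -> : 'X%:M - map_mx polyC P *m map_mx polyC A *m map_mx polyC (invmx P) =
   map_mx polyC P *m ('X%:M - map_mx polyC A) *m map_mx polyC (invmx P).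
  by rewrite mulmxBr mulmxBl scalar_mxC -(mulmxA 'X%:M) PQ mulmx1.
rewrite !(det_mulmx (R := {poly F})) mulrAC -(det_mulmx (R := {poly F})) PQ det1 mul1r.
done.
Qed.
Lemma char_lblock r s (X : 'M[F]_r) (Z : 'M[F]_(s, r)) (W : 'M[F]_s) :
  char_poly (block_mx X 0 Z W) = char_poly X * char_poly W.
Proof.
rewrite /char_poly /char_poly_mx map_block_mx /= map_mx0 scalar_mx_block.
by rewrite opp_block_mx add_block_mx oppr0 addr0 det_lblock.
Qed.

Lemma char_pid n r (A : 'M[F]_n) : (r <= n)%N ->
  stablemx (pid_mx r : 'M[F]_(r, n)) A ->
  exists Q : {poly F}, char_poly A = char_poly (conjmx (pid_mx r : 'M[F]_(r, n)) A) * Q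
     /\ size Q = (n - r)%N.+1.
Proof.
move=> hr; move: (n - r)%N (subnKC hr) => s e; clear hr; case: n / e in A *.
rewrite pid_mx_row -[A]submxK; set X := ulsubmx A; set Y := ursubmx A.
set Z := dlsubmx A; set W := drsubmx A => hst.
have VA : row_mx 1%:M 0 *m block_mx X Y Z W = row_mx X Y.
  by rewrite mul_row_block !mul1mx !mul0mx !addr0.
have Y0 : Y = 0.
  move: hst; rewrite VA => /submxP [D].
  by rewrite mul_mx_row mulmx1 mulmx0 => /eq_row_mx [].
move: hst VA; rewrite Y0 => hst VA.
have rf : row_free (row_mx (1%:M : 'M[F]_r) (0 : 'M_(r, s))).
  by rewrite -pid_mx_row /row_free rank_pid_mx ?leq_addr.
have -> : conjmx (row_mx 1%:M 0) (block_mx X 0 Z W) = X.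
  apply: (row_free_inj rf); rewrite mulmxKpV // VA.
  by rewrite mul_mx_row mulmx1 mulmx0.
by exists (char_poly W); rewrite char_lblock size_char_poly.
Qed.
Lemma char_restrict n (A H : 'M[F]_n) : stablemx H A ->
  exists Q : {poly F}, char_poly A = char_poly (restrictmx H A) * Q
     /\ size Q = (n - \rank H)%N.+1.
Proof.
move=> hst; set r := \rank H; set P := row_ebase H.
have Pu : P \in unitmx := row_ebase_unit H.
have rbE : row_base H = pid_mx r *m P by [].
have rfpid : row_free (pid_mx r : 'M[F]_(r, n)).
  by rewrite /row_free rank_pid_mx ?rank_leq_col.
have st1 : stablemx (pid_mx r : 'M[F]_(r, n)) (conjmx P A).
  have := hst; rewrite -stablemx_row_base rbE => /(submxMr (invmx P)).
  by rewrite mulmxK // /conjmx pinvmxE // !mulmxA.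
rewrite rbE conjMumx //.
have [Q [eQ sQ]] := @char_pid n r (conjmx P A) (rank_leq_col H) st1.
exists Q; split => //; rewrite -eQ /conjmx pinvmxE //.
by rewrite char_poly_conj.
Qed.

Lemma geo_le n (A H : 'M[F]_n) l : stablemx H A ->
  (\rank (eigenspace A l) <= \rank (eigenspace (restrictmx H A) l) + (n - \rank H))%N.
Proof.
move=> hst; set B := row_base H; set Rm := restrictmx H A; set E := eigenspace A l.
have rfB : row_free B := row_base_free H.
have BA : Rm *m B = B *m A.
  by rewrite /Rm /conjmx mulmxKpV // stablemx_row_base.
have key : (E :&: H <= eigenspace Rm l *m B)%MS.
  apply/row_subP => i; set v := row i (E :&: H)%MS.
  have vEH : (v <= E :&: H)%MS := row_sub i _.
  have vH : (v <= B)%MS by rewrite eq_row_base (submx_trans vEH) ?capmxSr.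
  have vE : v *m A = l *: v.
    by apply/eigenspaceP; rewrite (submx_trans vEH) ?capmxSl.
  rewrite -(mulmxKpV vH); apply: submxMr; apply/eigenspaceP.
  apply: (row_free_inj rfB); rewrite -mulmxA BA mulmxA mulmxKpV // vE.
  by rewrite -scalemxAl mulmxKpV.
have h1 := mxrankS key.
have h2 := mxrankM_maxl (eigenspace Rm l) B.
have h3 := mxrank_sum_cap E H.
have h4 := rank_leq_col (E + H)%MS.
lia.
Qed.
End Alg.

Theorem theorem5p1 (R : realType) (n : nat) (A H : 'M[R[i]]_n) :
  stablemx H A ->
  forall l : R[i],
    [/\ (alg_mult A l <= alg_mult (restrictmx H A) l + (n - \rank H))%N,
        (geo_mult A l <= geo_mult (restrictmx H A) l + (n - \rank H))%N
      & forall mu : 'rV[R[i]]_n -> R, is_vnorm mu ->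
          partial_norm mu H A < ComplexField.Normc.normc l ->
          (alg_mult A l <= n - \rank H)%N /\ (geo_mult A l <= n - \rank H)%N].
Proof.
move=> hst l.
have [Q [eQ sQ]] := @char_restrict _ _ A H hst.
have Qn0 : Q != 0 by rewrite -size_poly_gt0 sQ.
have cpn0 : char_poly (restrictmx H A) != 0 := monic_neq0 (char_poly_monic _).
have algE : alg_mult A l = (alg_mult (restrictmx H A) l + mup l Q)%N.
  by rewrite /alg_mult eQ mupM.
have mQ : (mup l Q <= n - \rank H)%N by have := @mup_le_size _ Q l Qn0; rewrite sQ.
have p1 : (alg_mult A l <= alg_mult (restrictmx H A) l + (n - \rank H))%N.
  by rewrite algE leq_add2l.
have p2 := @geo_le _ _ A H l hst.
split => // mu hmu hlt.
suff noeig : ~~ eigenvalue (restrictmx H A) l.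
  have a0 : alg_mult (restrictmx H A) l = 0%N.
    by rewrite /alg_mult mupNroot // -eigenvalue_root_char.
  have g0 : \rank (eigenspace (restrictmx H A) l) = 0%N.
    by move: noeig; rewrite /eigenvalue negbK => /eqP ->; rewrite mxrank0.
  by move: p1 p2; rewrite a0 g0 /geo_mult.
apply/negP => /eigenvalueP [y yR yn0].
set B := row_base H.
have BA : restrictmx H A *m B = B *m A.
  by rewrite /conjmx mulmxKpV // stablemx_row_base.
set x := y *m B.
have xH : (x <= H)%MS by rewrite -(eq_row_base H) submxMl.
have xn0 : x != 0.
  apply: contra yn0 => /eqP; rewrite -(mul0mx _ B) => /(row_free_inj (row_base_free H)) ->.
  by [].
have xA : x *m A = l *: x by rewrite -mulmxA -BA mulmxA yR -scalemxAl.
have mupos : forall z, z != 0 -> 0 < mu z.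
  move=> z zn0; rewrite lt_def (@mu_ge0 _ _ _ hmu) andbT; apply: contra zn0 => /eqP.
  by move/(@mu_eq0 _ _ _ hmu) => ->.
have [C hC] := @mu_bounded _ _ mu hmu A.
set S := [set r : R | exists x : 'rV[R[i]]_n,
         [/\ (x <= H)%MS, x != 0 & r = mu (x *m A) / mu x]]%classic.
have ub : has_ubound S.
  exists C => r [z [zH zn0 ->]]; rewrite ler_pdivrMr ?mupos //; exact: hC.
have inS : S (ComplexField.Normc.normc l).
  exists x; split => //; rewrite xA (@muZ _ _ _ hmu) mulfK //.
  by rewrite gt_eqF // mupos.
have := ub_le_sup ub inS.
by move: hlt; rewrite /partial_norm -/S ltNge => /negbTE ->.
Qed.
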